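(* Let $V$ be a real Lorentzian vector space (signature $(1,q)$) of dimension $m=1+q\ge 3$, and let $R$ be an algebraic curvature tensor on $V$. If $\operatorname{trace}\{\mathcal{J}_R(x)^2\}=0$ for every complex null vector $x\in\mathcal{N}$, then $R$ has constant sectional curvature, i.e. there is a constant $c$ with $R(x,y,z,w)=c\{(x,w)(y,z)-(x,z)(y,w)\}$ for all $x,y,z,w\in V$.
   Context: An algebraic curvature tensor is $R\in\otimes^4V^*$ with $R(x,y,z,w)=R(z,w,x,y)=-R(y,x,z,w)$ and $R(x,y,z,w)+R(y,z,x,w)+R(z,x,y,w)=0$. The Jacobi operator $\mathcal{J}_R(x)$ is defined by $(\mathcal{J}_R(x)y,w)=R(y,x,x,w)$. The inner product, $R$ and $\mathcal{J}_R$ are extended complex-multilinearly to $V_{\mathbb{C}}=V\otimes\mathbb{C}$; $\mathcal{N}=\{v\in V_{\mathbb{C}}:(v,v)=0\}$. *)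

(* Defs.v *)
From HB Require Import structures.
From mathcomp Require Import all_boot all_order all_algebra.
From mathcomp Require Import reals.
From mathcomp Require Import complex.
Set Implicit Arguments. Unset Strict Implicit. Unset Printing Implicit Defensive.
Import Order.TTheory GRing.Theory Num.Theory.
Local Open Scope ring_scope.

(* The Lorentzian space V = R^m with orthonormal basis e_0,...,e_(m-1),
   metric (x,y) = - x_0 y_0 + sum_(i>0) x_i y_i  (signature (1,q), q = m-1).
   Vectors are row vectors 'rV[K]_m over K = R (real) or K = R[i] (complexified). *)

Definition eta (m : nat) (i : 'I_m) : int := if val i == 0%N then -1 else 1.

(* complex-bilinear (NOT hermitian) extension of the Lorentzian inner product *)
Definition lip (K : comRingType) (m : nat) (x y : 'rV[K]_m) : K :=
  \sum_(i < m) (eta i)%:~R * x 0 i * y 0 i.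

Definition tensor4 (R : realType) (m : nat) := 'I_m -> 'I_m -> 'I_m -> 'I_m -> R.

Definition tev (R : realType) (K : comRingType) (f : {rmorphism R -> K}) (m : nat)
  (T : tensor4 R m) (x y z w : 'rV[K]_m) : K :=
  \sum_(i < m) \sum_(j < m) \sum_(k < m) \sum_(l < m)
     f (T i j k l) * x 0 i * y 0 j * z 0 k * w 0 l.

Definition Rev (R : realType) (m : nat) (T : tensor4 R m) (x y z w : 'rV[R]_m) : R :=
  tev idfun T x y z w.

Definition RevC (R : realType) (m : nat) (T : tensor4 R m) (x y z w : 'rV[R[i]]_m) : R[i] :=
  tev (GRing.RMorphism.clone _ _ (@real_complex R) _) T x y z w.

Definition is_acurv (R : realType) (m : nat) (T : tensor4 R m) : Prop :=
  forall x y z w : 'rV[R]_m,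
    [/\ Rev T x y z w = Rev T z w x y,
        Rev T x y z w = - Rev T y x z w
      & Rev T x y z w + Rev T y z x w + Rev T z x y w = 0].

(* Jacobi operator J_R(x) on V_C, as the matrix acting on column coordinates:
   (J_R(x) y, w) = R(y,x,x,w), i.e. (J_R(x) e_b)_a = eta_a R(e_b,x,x,e_a). *)
Definition jacobiC (R : realType) (m : nat) (T : tensor4 R m) (x : 'rV[R[i]]_m)
  : 'M[R[i]]_m :=
  \matrix_(a < m, b < m) ((eta a)%:~R * RevC T (delta_mx 0 b) x x (delta_mx 0 a)).

Definition nullC (R : realType) (m : nat) (x : 'rV[R[i]]_m) : Prop := lip x x = 0.

(* Main.v *)
Require Import Defs.
From HB Require Import structures.
From mathcomp Require Import all_boot all_order all_algebra.
From mathcomp Require Import reals.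
From mathcomp Require Import complex.
From mathcomp Require Import ring lra.
Import Order.TTheory GRing.Theory Num.Theory.
Set Implicit Arguments. Unset Strict Implicit.
Local Open Scope ring_scope.


Section Basic.
Variables (R : realType) (m : nat) (T : tensor4 R m).

Ltac linsolve := rewrite /Rev /tev /=;
  rewrite mulr_sumr -big_split; apply: eq_bigr => ? _;
  rewrite mulr_sumr -big_split; apply: eq_bigr => ? _;
  rewrite mulr_sumr -big_split; apply: eq_bigr => ? _;
  rewrite mulr_sumr -big_split; apply: eq_bigr => ? _;
  rewrite !mxE /=; ring.

Lemma Rev_lin1 a (x x' y z w : 'rV[R]_m) :
  Rev T (a *: x + x') y z w = a * Rev T x y z w + Rev T x' y z w.
Proof. linsolve. Qed.
Lemma Rev_lin2 a (x x' y z w : 'rV[R]_m) :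
  Rev T y (a *: x + x') z w = a * Rev T y x z w + Rev T y x' z w.
Proof. linsolve. Qed.
Lemma Rev_lin3 a (x x' y z w : 'rV[R]_m) :
  Rev T y z (a *: x + x') w = a * Rev T y z x w + Rev T y z x' w.
Proof. linsolve. Qed.
Lemma Rev_lin4 a (x x' y z w : 'rV[R]_m) :
  Rev T y z w (a *: x + x') = a * Rev T y z w x + Rev T y z w x'.
Proof. linsolve. Qed.

Lemma Rev_01 y z w : Rev T 0 y z w = 0.
Proof. by have := Rev_lin1 1 0 0 y z w; rewrite scale1r addr0; lra. Qed.
Lemma Rev_04 x y z : Rev T x y z 0 = 0.
Proof. by have := Rev_lin4 1 0 0 x y z; rewrite scale1r addr0; lra. Qed.

Lemma Rev_sum1 (F : 'I_m -> 'rV[R]_m) (c : 'I_m -> R) y z w :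
  Rev T (\sum_i c i *: F i) y z w = \sum_i c i * Rev T (F i) y z w.
Proof.
elim/big_rec2: _ => [|i s1 s2 _ <-]; first exact: Rev_01.
by rewrite Rev_lin1.
Qed.
Lemma Rev_sum4 (F : 'I_m -> 'rV[R]_m) (c : 'I_m -> R) x y z :
  Rev T x y z (\sum_i c i *: F i) = \sum_i c i * Rev T x y z (F i).
Proof.
elim/big_rec2: _ => [|i s1 s2 _ <-]; first exact: Rev_04.
by rewrite Rev_lin4.
Qed.

Lemma Rev_exp1 x y z w : Rev T x y z w = \sum_i x 0 i * Rev T (delta_mx 0 i) y z w.
Proof. by rewrite {1}(row_sum_delta x) Rev_sum1. Qed.
Lemma Rev_exp4 x y z w : Rev T x y z w = \sum_i w 0 i * Rev T x y z (delta_mx 0 i).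
Proof. by rewrite {1}(row_sum_delta w) Rev_sum4. Qed.

Definition bf (d : 'I_m -> R) (x y : 'rV[R]_m) := \sum_i d i * x 0 i * y 0 i.

Lemma bf_lin1 d a (x x' y : 'rV[R]_m) : bf d (a *: x + x') y = a * bf d x y + bf d x' y.
Proof. rewrite /bf mulr_sumr -big_split; apply: eq_bigr => i _; rewrite !mxE /=; ring. Qed.
Lemma bf_lin2 d a (x x' y : 'rV[R]_m) : bf d y (a *: x + x') = a * bf d y x + bf d y x'.
Proof. rewrite /bf mulr_sumr -big_split; apply: eq_bigr => i _; rewrite !mxE /=; ring. Qed.
Lemma bf_sym d (x y : 'rV[R]_m) : bf d x y = bf d y x.
Proof. rewrite /bf; apply: eq_bigr => i _; ring. Qed.
Lemma bf_e d i j : bf d (delta_mx 0 i) (delta_mx 0 j) = if i == j then d i else 0.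
Proof.
rewrite /bf (bigD1 i) //= big1 => [|k /negbTE kn]; last by rewrite !mxE kn /= !mulr0 mul0r.
rewrite !mxE !eqxx /= addr0 mulr1.
by case: eqP; rewrite ?mulr1 ?mulr0.
Qed.
Lemma bf_mx d (x y : 'rV[R]_m) : bf d x y = (x *m diag_mx (\row_i d i) *m y^T) 0 0.
Proof. rewrite /bf !mxE; apply: eq_bigr => i _; rewrite mul_mx_diag !mxE; ring. Qed.

Lemma lip_bf (x y : 'rV[R]_m) : lip x y = bf (fun i => (Defs.eta i)%:~R) x y.
Proof. reflexivity. Qed.

End Basic.


Section Step1.
Variables (R : realType) (n : nat).
Local Notation m := n.+1.
Local Notation et i := ((Defs.eta i)%:~R : R).

Lemma eta0 : et (ord0 : 'I_m) = -1. Proof. by rewrite /Defs.eta /=. Qed.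
Lemma eta_sp (i : 'I_m) : i != ord0 -> et i = 1.
Proof. by rewrite /Defs.eta; case: i => [[|k] Hk] //=. Qed.
Lemma eta_sq (i : 'I_m) : et i * et i = 1.
Proof. by case: (i =P ord0) => [->|/eqP /eta_sp ->]; rewrite ?eta0 ?mulr1 // mulrNN mulr1. Qed.

Definition Gm : 'M[R]_m := diag_mx (\row_i et i).
Definition dot (x y : 'rV[R]_m) := bf (fun _ => 1) x y.

Lemma GG : Gm *m Gm = 1%:M.
Proof.
apply/matrixP => i j; rewrite mul_mx_diag !mxE.
case: eqP => [->|_]; by rewrite ?eta_sq ?mulr0n ?mul0r ?mulr1n.
Qed.
Lemma GT : Gm^T = Gm. Proof. exact: tr_diag_mx. Qed.

Lemma lip_mx (x y : 'rV[R]_m) : lip x y = (x *m Gm *m y^T) 0 0.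
Proof. by rewrite lip_bf bf_mx. Qed.
Lemma dot_mx (x y : 'rV[R]_m) : dot x y = (x *m y^T) 0 0.
Proof. rewrite /dot /bf !mxE; apply: eq_bigr => i _; rewrite !mxE; ring. Qed.

End Step1.


Section Step1b.
Variables (R : realType) (n : nat).
Local Notation m := n.+1.
Local Notation et i := ((Defs.eta i)%:~R : R).
Local Notation G := (Gm R n).

Lemma step1 (x : 'rV[R]_m) (M : 'M[R]_m) : M^T = M -> x *m M = 0 -> lip x x = 0 ->
  dot x x != 0 -> \tr (G *m M *m G *m M) = 0 ->
  forall w w', dot x w = 0 -> lip x w = 0 -> dot x w' = 0 -> lip x w' = 0 ->
  (w *m M *m w'^T) 0 0 = 0.
Proof.
move=> MT xM xnull s0 htr w w' dw lw dw' lw'.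
set s := dot x x in s0.
have xx : x *m x^T = s%:M by rewrite [LHS]mx11_scalar -dot_mx.
have xGx : x *m G *m x^T = 0 by rewrite [LHS]mx11_scalar -lip_mx xnull; apply/matrixP => i j; rewrite !mxE mul0rn.
set X := x^T *m x.
set P := 1%:M - s^-1 *: (X + G *m X *m G).
have Pij : forall i j, P i j = (i == j)%:R - s^-1 * (x 0 i * x 0 j + et i * et j * (x 0 i * x 0 j)).
  move=> i j; rewrite /P /X /Gm mul_mx_diag mul_diag_mx !mxE !big_ord1 !mxE.
  by congr (_ - _ * (_ + _)); ring.
have s2 : s = 2 * (x 0 ord0 * x 0 ord0).
  have -> : s = s - lip x x by rewrite xnull subr0.
  rewrite /s /dot lip_bf /bf -sumrB (bigD1 ord0) //= big1 => [|i /eta_sp ->]; last by rewrite !mul1r subrr.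
  rewrite eta0; ring.
have Pi0 : forall i, P i ord0 = 0.
  move=> i; rewrite Pij eta0; case: (i =P ord0) => [->|/eqP /eta_sp ->].
    have E : forall a : R, a + -1 * -1 * a = 2 * a by move=> a; ring.
    by rewrite /= E -s2 mulVf // subrr.
  rewrite /=; ring.
have Psym : forall i j, P i j = P j i.
  by move=> i j; rewrite !Pij eq_sym; congr (_ - _ * (_ + _)); ring.
have PT : P^T = P by apply/matrixP => i j; rewrite mxE Psym.
have PG : P *m G = P.
  apply/matrixP => i j; rewrite /Gm mul_mx_diag [LHS]mxE.
  have -> : (\row_i0 et i0) 0 j = et j by rewrite mxE.
  case: (j =P ord0) => [->|/eqP /eta_sp ->]; last by rewrite mulr1.
  by rewrite Pi0 mul0r.
have GP : G *m P = P.
  apply/matrixP => i j; rewrite /Gm mul_diag_mx [LHS]mxE.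
  have -> : (\row_i0 et i0) 0 i = et i by rewrite mxE.
  case: (i =P ord0) => [->|/eqP /eta_sp ->]; last by rewrite mul1r.
  by rewrite Psym Pi0 mulr0.
have sc0 : forall k, (0 : R)%:M = 0 :> 'M_k.
  by move=> k; apply/matrixP => i j; rewrite !mxE mul0rn.
set A := X + G *m X *m G.
have XX : X *m X = s *: X.
  have -> : X *m X = x^T *m (x *m x^T) *m x by rewrite /X !mulmxA.
  by rewrite xx mul_mx_scalar -scalemxAl.
have XGX : X *m G *m X = 0.
  have -> : X *m G *m X = x^T *m (x *m G *m x^T) *m x by rewrite /X !mulmxA.
  by rewrite xGx mulmx0 mul0mx.
have AA : A *m A = s *: A.
  rewrite /A mulmxDl !mulmxDr.
  have -> : X *m (G *m X *m G) = X *m G *m X *m G by rewrite !mulmxA.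
  have -> : G *m X *m G *m X = G *m (X *m G *m X) by rewrite !mulmxA.
  have -> : G *m X *m G *m (G *m X *m G) = G *m (X *m X) *m G.
    by rewrite -!mulmxA (mulmxA G G) GG mul1mx.
  by rewrite XGX XX mulmx0 mul0mx addr0 add0r -scalemxAr -scalemxAl scalerDr.
have P2 : P *m P = P.
  rewrite /P -/A mulmxBl !mulmxBr mul1mx mulmx1 mul1mx -scalemxAl -scalemxAr AA !scalerA.
  have -> : s^-1 / s * s = s^-1 by field.
  by rewrite subrr subr0.
have Mxt : M *m x^T = 0 by rewrite -{1}MT -trmx_mul xM trmx0.
have MX : M *m X = 0 by rewrite /X mulmxA Mxt mul0mx.
have AG : A *m G = X *m G + G *m X by rewrite /A mulmxDl -!mulmxA GG mulmx1.
have MP : M *m P = M *m G - s^-1 *: (M *m G *m X).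
  rewrite -{1}PG /P -/A mulmxBl mul1mx -scalemxAl AG mulmxBr -scalemxAr mulmxDr.
  by rewrite mulmxA MX mul0mx add0r mulmxA.
set N := P *m M *m P.
have trNN : \tr (N *m N) = \tr (M *m P *m M *m P).
  have -> : N *m N = P *m (M *m (P *m P) *m M *m P) by rewrite /N !mulmxA.
  by rewrite P2 mxtrace_mulC -(mulmxA (M *m P *m M)) P2.
have KM : M *m G *m X *m (M *m G) = 0.
  have -> : M *m G *m X *m (M *m G) = M *m G *m x^T *m (x *m M) *m G by rewrite /X !mulmxA.
  by rewrite xM mulmx0 mul0mx.
have KK : M *m G *m X *m (M *m G *m X) = 0 by rewrite mulmxA KM mul0mx.
have trK : \tr (M *m G *m (M *m G *m X)) = 0.
  have -> : M *m G *m (M *m G *m X) = (M *m G *m M *m G *m x^T) *m x by rewrite /X !mulmxA.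
  by rewrite mxtrace_mulC !mulmxA xM !mul0mx mxtrace0.
have trMP : \tr (M *m P *m M *m P) = \tr (G *m M *m G *m M).
  rewrite -(mulmxA (M *m P)) MP mulmxBl !mulmxBr -!scalemxAl -!scalemxAr KM KK.
  rewrite !scaler0 subr0 subr0 linearB /= mxtraceZ trK mulr0 subr0.
  by rewrite !mulmxA mxtrace_mulC !mulmxA.
have NT : N^T = N by rewrite /N !trmx_mul PT MT mulmxA.
have sumN : \sum_i \sum_j N i j ^+ 2 = 0.
  transitivity (\tr (N *m N)); last by rewrite trNN trMP htr.
  rewrite /mxtrace; apply: eq_bigr => i _; rewrite mxE.
  apply: eq_bigr => j _; rewrite expr2; congr (_ * _).
  by rewrite -{1}NT mxE.
have N0 : N = 0.
  apply/matrixP => i j; rewrite [RHS]mxE.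
  have H1 := psumr_eq0P (fun k _ => sumr_ge0 _ (fun j _ => sqr_ge0 (N k j))) sumN (i:=i) isT.
  have H2 := psumr_eq0P (fun j _ => sqr_ge0 (N i j)) H1 (i:=j) isT.
  by apply/eqP; rewrite -sqrf_eq0 H2.
have Pw : forall v : 'rV[R]_m, dot x v = 0 -> lip x v = 0 -> P *m v^T = v^T.
  move=> v dv lv.
  have xv : x *m v^T = 0 by rewrite [LHS]mx11_scalar -dot_mx dv sc0.
  have xGv : x *m G *m v^T = 0 by rewrite [LHS]mx11_scalar -lip_mx lv sc0.
  have Av : A *m v^T = 0.
    rewrite /A mulmxDl.
    have -> : X *m v^T = x^T *m (x *m v^T) by rewrite /X mulmxA.
    have -> : G *m X *m G *m v^T = G *m x^T *m (x *m G *m v^T) by rewrite /X !mulmxA.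
    by rewrite xv xGv !mulmx0 addr0.
  by rewrite /P -/A mulmxBl mul1mx -scalemxAl Av scaler0 subr0.
have wP : w *m P = w.
  by rewrite -[LHS]trmxK trmx_mul PT Pw // trmxK.
rewrite -wP -(Pw w') // !mulmxA.
have -> : w *m P *m M *m P = w *m N by rewrite /N !mulmxA.
by rewrite N0 mulmx0 mul0mx mxE.
Qed.
End Step1b.


Section Conn.
Variables (R : realType) (n : nat) (T : tensor4 R n.+1).
Local Notation m := n.+1.
Local Notation G := (Gm R n).
Local Notation f := (real_complex R).

Lemma RevC_map (a b c d : 'rV[R]_m) :
  RevC T (map_mx f a) (map_mx f b) (map_mx f c) (map_mx f d) = f (Rev T a b c d).
Proof.
rewrite /RevC /Rev /tev /= !rmorph_sum; apply: eq_bigr => i _.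
rewrite !rmorph_sum; apply: eq_bigr => j _.
rewrite !rmorph_sum; apply: eq_bigr => k _.
rewrite !rmorph_sum; apply: eq_bigr => l _.
by rewrite !rmorphM !mxE.
Qed.

Lemma lip_map (a b : 'rV[R]_m) : lip (map_mx f a) (map_mx f b) = f (lip a b).
Proof.
rewrite /lip rmorph_sum; apply: eq_bigr => i _.
by rewrite !rmorphM !mxE rmorph_int.
Qed.

Lemma Rev_sym14 (hT : is_acurv T) a y z b : Rev T a y z b = Rev T b z y a.
Proof.
have [h1 _ _] := hT a y z b; have [_ h2 _] := hT z b a y.
have [h3 _ _] := hT b z y a; have [_ h4 _] := hT y a b z.
have [h5 _ _] := hT a y b z. 
by rewrite h1 h2 h3 h4 -h5.
Qed.

Lemma bil_Rev (x w w' : 'rV[R]_m) :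
  (w *m (\matrix_(a, b) Rev T (delta_mx 0 a) x x (delta_mx 0 b)) *m w'^T) 0 0 = Rev T w x x w'.
Proof.
rewrite mxE (Rev_exp4 T w x x w'); apply: eq_bigr => b _.
rewrite !mxE mulrC (Rev_exp1 T w); congr (_ * _); apply: eq_bigr => a _.
by rewrite !mxE.
Qed.

Lemma nullF (hT : is_acurv T)
  (H : forall xc : 'rV[R[i]]_m, nullC xc -> \tr (jacobiC T xc *m jacobiC T xc) = 0) :
  forall x w w' : 'rV[R]_m, lip x x = 0 -> dot x x != 0 -> dot x w = 0 -> lip x w = 0 ->
    dot x w' = 0 -> lip x w' = 0 -> Rev T w x x w' = 0.
Proof.
move=> x w w' xn s0 dw lw dw' lw'.
set M := \matrix_(a, b) Rev T (delta_mx 0 a) x x (delta_mx 0 b) : 'M[R]_m.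
have MT : M^T = M by apply/matrixP => a b; rewrite !mxE Rev_sym14.
have xM : x *m M = 0.
  apply/matrixP => i b; rewrite (ord1 i) !mxE.
  transitivity (Rev T x x x (delta_mx 0 b)).
    by rewrite (Rev_exp1 T x); apply: eq_bigr => a _; rewrite mxE.
  have [_ h _] := hT x x x (delta_mx 0 b); lra.
have J : jacobiC T (map_mx f x) = map_mx f (G *m M).
  apply/matrixP => a b; rewrite /jacobiC /Gm mul_diag_mx !mxE.
  rewrite -(map_delta_mx f 0 b) -(map_delta_mx f 0 a) RevC_map.
  by rewrite rmorphM rmorph_int Rev_sym14.
have trJ : \tr (G *m M *m G *m M) = 0.
  apply: (fmorph_inj f); rewrite rmorph0 -trace_map_mx.
  rewrite -mulmxA map_mxM -J H //.
  by rewrite /nullC lip_map xn rmorph0.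
by rewrite -bil_Rev; apply: (step1 MT xM xn s0 trJ dw lw dw' lw').
Qed.
End Conn.


Section Step2.
Variables (R : realType) (n : nat).
Local Notation m := n.+1.
Local Notation V := 'rV[R]_m.
Variable Q : V -> V -> V -> V -> R.
Hypothesis QL1 : forall a (x x' y z w : V), Q (a *: x + x') y z w = a * Q x y z w + Q x' y z w.
Hypothesis QL2 : forall a (x x' y z w : V), Q y (a *: x + x') z w = a * Q y x z w + Q y x' z w.
Hypothesis QL3 : forall a (x x' y z w : V), Q y z (a *: x + x') w = a * Q y z x w + Q y z x' w.
Hypothesis QL4 : forall a (x x' y z w : V), Q y z w (a *: x + x') = a * Q y z w x + Q y z w x'.
Hypothesis Qac : forall x y z w : V,
  [/\ Q x y z w = Q z w x y, Q x y z w = - Q y x z w & Q x y z w + Q y z x w + Q z x y w = 0].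
Hypothesis QF : forall x w w' : V, lip x x = 0 -> dot x x != 0 -> dot x w = 0 -> lip x w = 0 ->
    dot x w' = 0 -> lip x w' = 0 -> Q w x x w' = 0.

Local Notation e i := (@delta_mx R 1 m 0 i).
Local Notation q a b c d := (Q (e a) (e b) (e c) (e d)).
Local Notation o := (@ord0 n).

Lemma QZ1 a (x y z w : V) : Q (a *: x) y z w = a * Q x y z w.
Proof.
have h0 : Q 0 y z w = 0 by have := QL1 1 0 0 y z w; rewrite scale1r addr0 mul1r; lra.
by rewrite -[a *: x]addr0 QL1 h0 addr0.
Qed.
Lemma QZ2 a (x y z w : V) : Q y (a *: x) z w = a * Q y x z w.
Proof.
have h0 : Q y 0 z w = 0 by have := QL2 1 0 0 y z w; rewrite scale1r addr0 mul1r; lra.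
by rewrite -[a *: x]addr0 QL2 h0 addr0.
Qed.
Lemma QZ3 a (x y z w : V) : Q y z (a *: x) w = a * Q y z x w.
Proof.
have h0 : Q y z 0 w = 0 by have := QL3 1 0 0 y z w; rewrite scale1r addr0 mul1r; lra.
by rewrite -[a *: x]addr0 QL3 h0 addr0.
Qed.
Lemma QZ4 a (x y z w : V) : Q y z w (a *: x) = a * Q y z w x.
Proof.
have h0 : Q y z w 0 = 0 by have := QL4 1 0 0 y z w; rewrite scale1r addr0 mul1r; lra.
by rewrite -[a *: x]addr0 QL4 h0 addr0.
Qed.

Lemma qS1 a b c d : q a b c d = q c d a b. Proof. by case: (Qac (e a) (e b) (e c) (e d)). Qed.
Lemma qS2 a b c d : q a b c d = - q b a c d. Proof. by case: (Qac (e a) (e b) (e c) (e d)). Qed.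
Lemma qS3 a b c d : q a b c d + q b c a d + q c a b d = 0. Proof. by case: (Qac (e a) (e b) (e c) (e d)). Qed.
Lemma qS4 a b c d : q a b c d = - q a b d c.
Proof. by rewrite qS1 qS2 qS1. Qed.
Lemma qrev a b c d : q a b c d = q d c b a.
Proof. by rewrite qS1 qS2 qS4 opprK qS1. Qed.
Lemma qaa a c d : q a a c d = 0.
Proof. have := qS2 a a c d; lra. Qed.
Lemma qcc a b c : q a b c c = 0.
Proof. have := qS4 a b c c; lra. Qed.

Ltac expand := rewrite ?(QL1, QL2, QL3, QL4, QZ1, QZ2, QZ3, QZ4).
Ltac bfexpand := rewrite ?lip_bf /dot ?(bf_lin1, bf_lin2) ?bf_e.

Lemma bf_Z1 d a (x y : V) : bf d (a *: x) y = a * bf d x y.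
Proof. rewrite /bf mulr_sumr; apply: eq_bigr => i _; rewrite !mxE /=; ring. Qed.
Lemma bf_Z2 d a (x y : V) : bf d y (a *: x) = a * bf d y x.
Proof. rewrite /bf mulr_sumr; apply: eq_bigr => i _; rewrite !mxE /=; ring. Qed.

Ltac idx := repeat match goal with
 | |- context [?x == ?x] => rewrite eqxx
 | H : is_true (?x != ?y) |- context [?x == ?y] => rewrite (negbTE H)
 | H : is_true (?x != ?y) |- context [?y == ?x] => rewrite [y == x]eq_sym (negbTE H)
 | H : is_true (?x != ord0) |- context [Defs.eta ?x] => rewrite (@eta_sp _ _ _ H)
 | |- context [Defs.eta ord0] => rewrite eta0
 end.
Ltac bfx := rewrite ?lip_bf /dot ?(bf_lin1, bf_lin2, bf_Z1, bf_Z2) ?bf_e; idx.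

Lemma E12 (p s t : 'I_m) : p != o -> s != o -> t != o -> s != p -> t != p ->
  q s o o t + q s p p t = 0 /\ q s o p t + q s p o t = 0.
Proof.
move=> p0 s0 t0 sp tp.
have hyp : forall a : R, a * a = 1 -> Q (e s) (1 *: e o + a *: e p) (1 *: e o + a *: e p) (e t) = 0.
  move=> a ha; apply: QF.
  all: bfx; try nra.
have h1 := hyp 1 (mulr1 1); have h2 := hyp (-1) (etrans (mulrNN 1 1) (mulr1 1)).
move: h1 h2; expand => h1 h2; split; lra.
Qed.

Lemma E3 (p r : 'I_m) (w w' : V) : p != o -> r != o -> p != r ->
  (forall a : R, a * a = 1 -> [/\ dot (5 *: e o + ((3 * a) *: e p + (4 * a) *: e r)) w = 0,
     lip (5 *: e o + ((3 * a) *: e p + (4 * a) *: e r)) w = 0,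
     dot (5 *: e o + ((3 * a) *: e p + (4 * a) *: e r)) w' = 0 &
     lip (5 *: e o + ((3 * a) *: e p + (4 * a) *: e r)) w' = 0]) ->
  25 * Q w (e o) (e o) w' + 9 * Q w (e p) (e p) w' + 12 * (Q w (e p) (e r) w' + Q w (e r) (e p) w')
   + 16 * Q w (e r) (e r) w' = 0.
Proof.
move=> p0 r0 pr H.
have hyp : forall a : R, a * a = 1 ->
    Q w (5 *: e o + ((3 * a) *: e p + (4 * a) *: e r)) (5 *: e o + ((3 * a) *: e p + (4 * a) *: e r)) w' = 0.
  move=> a ha; have [h1 h2 h3 h4] := H a ha; apply: QF => //.
    bfx; nra.
  bfx. apply/eqP. nra.
have h1 := hyp 1 (mulr1 1); have h2 := hyp (-1) (etrans (mulrNN 1 1) (mulr1 1)).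
move: h1 h2; rewrite ?(QL2, QL3, QZ2, QZ3) => h1 h2; nra.
Qed.

Variable i1 : 'I_m.
Hypothesis i1sp : i1 != o.
Hypothesis Qn : q i1 o o i1 = 0.

Lemma sec0 (s : 'I_m) : s != o -> q s o o s = 0.
Proof.
move=> s0; case: (s =P i1) => [->//|/eqP si].
have [h1 _] := E12 i1sp s0 s0 si si.
have is' : i1 != s by rewrite eq_sym.
have [h2 _] := E12 s0 i1sp i1sp is' is'.
have := qS1 s i1 i1 s; rewrite Qn add0r in h2; lra.
Qed.

Lemma secsp (s p : 'I_m) : s != o -> p != o -> s != p -> q s p p s = 0.
Proof. move=> s0 p0 sp; have [h1 _] := E12 p0 s0 s0 sp sp; have := sec0 s0; lra. Qed.

Lemma K1 (a b : 'I_m) : a != b -> q a b b a = 0.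
Proof.
move=> ab; case: (a =P o) => [ao|/eqP a0].
  rewrite ao qS1 sec0 //; by rewrite -ao eq_sym.
case: (b =P o) => [->|/eqP b0]; first exact: sec0.
exact: secsp.
Qed.

Lemma k2_0 (a c : 'I_m) : a != o -> c != o -> a != c -> q a o o c = 0.
Proof.
move=> a0 c0 ac.
have := @E3 a c (4 *: e a + (-3) *: e c) (4 *: e a + (-3) *: e c) a0 c0 ac.
have cond : (forall x : R, x * x = 1 -> [/\ dot (5 *: e o + ((3 * x) *: e a + (4 * x) *: e c)) (4 *: e a + (-3) *: e c) = 0,
     lip (5 *: e o + ((3 * x) *: e a + (4 * x) *: e c)) (4 *: e a + (-3) *: e c) = 0,
     dot (5 *: e o + ((3 * x) *: e a + (4 * x) *: e c)) (4 *: e a + (-3) *: e c) = 0 &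
     lip (5 *: e o + ((3 * x) *: e a + (4 * x) *: e c)) (4 *: e a + (-3) *: e c) = 0]).
  by move=> x hx; split; bfx; ring.
move=> /(_ cond); expand; rewrite !qaa !qcc.
have := sec0 a0; have := sec0 c0; have := qrev c o o a; have := secsp a0 c0 ac.
have ca : c != a by rewrite eq_sym.
have := secsp c0 a0 ca; have := qS4 a c a c; have := qS4 c a c a.
lra.
Qed.

Lemma k2_b (a b : 'I_m) : a != o -> b != o -> a != b -> q o b b a = 0.
Proof.
move=> a0 b0 ab; have ba : b != a by rewrite eq_sym.
have [_ h] := E12 a0 b0 b0 ba ba.
have := qS2 b o a b; have := qS4 o b a b; have := qS1 b a o b; lra.
Qed.

Lemma k2_sp (a b c : 'I_m) : a != o -> b != o -> c != o -> a != b -> b != c -> a != c ->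
  q a b b c = 0.
Proof.
move=> a0 b0 c0 ab bc ac; have cb : c != b by rewrite eq_sym.
have [h _] := E12 b0 a0 c0 ab cb; have := k2_0 a0 c0 ac; lra.
Qed.

Lemma K2 (a b c : 'I_m) : a != b -> b != c -> a != c -> q a b b c = 0.
Proof.
move=> ab bc ac.
case: (b =P o) => [bo|/eqP b0].
  by rewrite bo k2_0 // -bo // eq_sym.
case: (a =P o) => [ao|/eqP a0].
  by rewrite ao k2_b // -?ao // eq_sym.
case: (c =P o) => [co|/eqP c0].
  by rewrite co qrev k2_b // -?co // eq_sym.
exact: k2_sp.
Qed.

Lemma k3_0 (s p t : 'I_m) : s != o -> p != o -> t != o -> s != p -> p != t -> s != t ->
  q s o p t = 0.
Proof.
move=> s0 p0 t0 sp pt st; have ps : p != s by rewrite eq_sym.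
have tp : t != p by rewrite eq_sym.
have ts : t != s by rewrite eq_sym.
have [_ h1] := E12 p0 s0 t0 sp tp.
have [_ h2] := E12 s0 p0 t0 ps ts.
have := qS3 s o p t; have := qS3 p o s t; have := qS2 s p o t; have := qS2 p s o t.
have := qS2 o p s t; have := qS2 o s p t; lra.
Qed.

Lemma Pswap (a b c d : 'I_m) : a != o -> b != o -> c != o -> d != o -> a != b -> a != c -> a != d ->
  b != c -> b != d -> c != d -> q a b c d + q a c b d = 0.
Proof.
move=> a0 b0 c0 d0 ab ac ad bc bd cd.
have := @E3 b c (e a) (e d) b0 c0 bc.
have cond : (forall x : R, x * x = 1 -> [/\ dot (5 *: e o + ((3 * x) *: e b + (4 * x) *: e c)) (e a) = 0,
     lip (5 *: e o + ((3 * x) *: e b + (4 * x) *: e c)) (e a) = 0,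
     dot (5 *: e o + ((3 * x) *: e b + (4 * x) *: e c)) (e d) = 0 &
     lip (5 *: e o + ((3 * x) *: e b + (4 * x) *: e c)) (e d) = 0]).
  by move=> x hx; split; bfx; ring.
move=> /(_ cond).
have := k2_0 a0 d0 ad; have := k2_sp a0 b0 d0 ab bd ad.
have := k2_sp a0 c0 d0 ac cd ad; lra.
Qed.

Lemma k3_sp (a b c d : 'I_m) : a != o -> b != o -> c != o -> d != o -> a != b -> a != c -> a != d ->
  b != c -> b != d -> c != d -> q a b c d = 0.
Proof.
move=> a0 b0 c0 d0 ab ac ad bc bd cd.
have ba : b != a by rewrite eq_sym.
have ca : c != a by rewrite eq_sym.
have cb : c != b by rewrite eq_sym.
have := Pswap a0 b0 c0 d0 ab ac ad bc bd cd.
have := Pswap c0 b0 a0 d0 cb ca cd ba bd ad.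
have := qS3 a b c d; have := qS2 b c a d; have := qS2 c a b d; lra.
Qed.

Ltac neq := first [done | by rewrite eq_sym].

Lemma K3 (a b c d : 'I_m) : a != b -> a != c -> a != d -> b != c -> b != d -> c != d ->
  q a b c d = 0.
Proof.
move=> ab ac ad bc bd cd.
case: (a =P o) => [ao|/eqP a0].
  subst a; rewrite qS2 (@k3_0 b c d) ?oppr0 //; neq.
case: (b =P o) => [bo|/eqP b0].
  subst b; rewrite (@k3_0 a c d) //; neq.
case: (c =P o) => [co|/eqP c0].
  subst c; rewrite qS1 qS2 (@k3_0 d a b) ?oppr0 //; neq.
case: (d =P o) => [dO|/eqP d0].
  subst d; rewrite qS1 (@k3_0 c a b) //; neq.
exact: k3_sp.
Qed.

Lemma qall (a b c d : 'I_m) : q a b c d = 0.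
Proof.
case: (a =P b) => [<-|/eqP ab]; first exact: qaa.
case: (c =P d) => [<-|/eqP cd]; first exact: qcc.
case: (a =P c) => [ac|/eqP ac].
  subst c; case: (b =P d) => [bd|/eqP bd].
    by subst d; rewrite qS4 K1 ?oppr0.
  by rewrite qS4 qS1 K2 ?oppr0 //; neq.
case: (a =P d) => [ad|/eqP ad].
  subst d; case: (b =P c) => [bc|/eqP bc].
    by subst c; rewrite K1.
  by rewrite qS1 K2 //; neq.
case: (b =P c) => [bc|/eqP bc].
  by subst c; rewrite K2.
case: (b =P d) => [bd|/eqP bd].
  by subst d; rewrite qS4 K2 ?oppr0 //; neq.
exact: K3.
Qed.

Lemma Q01 (y z w : V) : Q 0 y z w = 0.
Proof. by rewrite -(scale0r (0 : V)) QZ1 mul0r. Qed.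
Lemma Q02 (y z w : V) : Q y 0 z w = 0.
Proof. by rewrite -(scale0r (0 : V)) QZ2 mul0r. Qed.
Lemma Q03 (y z w : V) : Q y z 0 w = 0.
Proof. by rewrite -(scale0r (0 : V)) QZ3 mul0r. Qed.
Lemma Q04 (y z w : V) : Q y z w 0 = 0.
Proof. by rewrite -(scale0r (0 : V)) QZ4 mul0r. Qed.

Lemma Qzero (x y z w : V) : Q x y z w = 0.
Proof.
rewrite (row_sum_delta x).
elim/big_rec: _ => [|i s _ IH]; first exact: Q01.
rewrite QL1 IH addr0 (row_sum_delta y).
elim/big_rec: _ => [|j s' _ IH']; first by rewrite Q02 mulr0.
rewrite QL2 mulrDr IH' addr0 (row_sum_delta z).
elim/big_rec: _ => [|k s'' _ IH'']; first by rewrite Q03 !mulr0.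
rewrite QL3 !mulrDr IH'' addr0 (row_sum_delta w).
elim/big_rec: _ => [|l s''' _ IH''']; first by rewrite Q04 !mulr0.
by rewrite QL4 !mulrDr IH''' qall !mulr0 addr0.
Qed.

End Step2.


Lemma bianchi_aux (R : comRingType) (r1 r2 r3 c a1 a2 a3 : R) :
  r1 + r2 + r3 = 0 -> a1 + a2 + a3 = 0 ->
  r1 - c * a1 + (r2 - c * a2) + (r3 - c * a3) = 0.
Proof.
move=> h1 h2; transitivity (r1 + r2 + r3 - c * (a1 + a2 + a3)); first ring.
by rewrite h1 h2 mulr0 subr0.
Qed.

Unset Implicit Arguments.
Theorem theorem1p2 (R : realType) (m : nat) (hm : (3 <= m)%N) (T : tensor4 R m) :
  is_acurv T ->
  (forall x : 'rV[R[i]]_m, nullC x -> \tr (jacobiC T x *m jacobiC T x) = 0) ->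
  exists c : R, forall x y z w : 'rV[R]_m,
    Rev T x y z w = c * (lip x w * lip y z - lip x z * lip y w).
Proof.
case: m hm T => [|[|[|n]]] // _ T hT H.
pose i1 : 'I_n.+3 := @Ordinal n.+3 1 isT.
pose c := - Rev T (delta_mx 0 i1) (delta_mx 0 ord0) (delta_mx 0 ord0) (delta_mx 0 i1).
exists c.
pose Q := fun x y z w : 'rV[R]_n.+3 =>
  Rev T x y z w - c * (lip x w * lip y z - lip x z * lip y w).
have lsym : forall x y : 'rV[R]_n.+3, lip x y = lip y x by move=> x y; rewrite !lip_bf bf_sym.
have QL1 : forall (a : R) (x x' y z w : 'rV_n.+3),
    Q (a *: x + x') y z w = a * Q x y z w + Q x' y z w.
  by move=> a x x' y z w; rewrite /Q Rev_lin1 !lip_bf !bf_lin1; ring.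
have QL2 : forall (a : R) (x x' y z w : 'rV_n.+3),
    Q y (a *: x + x') z w = a * Q y x z w + Q y x' z w.
  by move=> a x x' y z w; rewrite /Q Rev_lin2 !lip_bf !bf_lin1; ring.
have QL3 : forall (a : R) (x x' y z w : 'rV_n.+3),
    Q y z (a *: x + x') w = a * Q y z x w + Q y z x' w.
  by move=> a x x' y z w; rewrite /Q Rev_lin3 !lip_bf !bf_lin2; ring.
have QL4 : forall (a : R) (x x' y z w : 'rV_n.+3),
    Q y z w (a *: x + x') = a * Q y z w x + Q y z w x'.
  by move=> a x x' y z w; rewrite /Q Rev_lin4 !lip_bf !bf_lin2; ring.
have Qac : forall x y z w : 'rV_n.+3,
    [/\ Q x y z w = Q z w x y, Q x y z w = - Q y x z w
      & Q x y z w + Q y z x w + Q z x y w = 0].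
  move=> x y z w; have [h1 h2 h3] := hT x y z w; rewrite /Q.
  rewrite ?(lsym y x) ?(lsym z x) ?(lsym w x) ?(lsym z y) ?(lsym w y) ?(lsym w z).
  split; first by rewrite h1; ring.
    by rewrite h2; ring.
  by apply: bianchi_aux => //; ring.
have QF : forall x w w' : 'rV_n.+3, lip x x = 0 -> dot x x != 0 -> dot x w = 0 -> lip x w = 0 ->
    dot x w' = 0 -> lip x w' = 0 -> Q w x x w' = 0.
  move=> x w w' h1 h2 h3 h4 h5 h6; rewrite /Q (nullF hT H h1 h2 h3 h4 h5 h6).
  by rewrite h1 h6 (lsym w x) h4; ring.
have i1sp : i1 != ord0 by [].
have Qn : Q (delta_mx 0 i1) (delta_mx 0 ord0) (delta_mx 0 ord0) (delta_mx 0 i1) = 0.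
  rewrite /Q /c !lip_bf !bf_e /= eta0 (eta_sp R i1sp); ring.
move=> x y z w; have := Qzero QL1 QL2 QL3 QL4 Qac QF i1sp Qn x y z w.
by rewrite /Q => /eqP; rewrite subr_eq0 => /eqP.
Qed.
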